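(* Let $R$ be an integral domain and let $I, J$ be power stable ideals of $R[X]$ such that the ideals $I\cap R$ and $J\cap R$ of $R$ are comaximal. Then $I\cap J$ is power stable.
   Context: An ideal $I$ of the polynomial ring $R[X]$ over an integral domain $R$ is called power stable if $I^t\cap R = (I\cap R)^t$ for all integers $t\geq 1$. *)

(* Defs.v *)
From HB Require Import structures.
From mathcomp Require Import all_boot all_order all_algebra.
Set Implicit Arguments. Unset Strict Implicit. Unset Printing Implicit Defensive.
Import GRing.Theory.
Local Open Scope ring_scope.

Definition is_ideal (A : comNzRingType) (I : A -> Prop) : Prop :=
  [/\ I 0,
      (forall x y, I x -> I y -> I (x + y)) &
      (forall r x, I x -> I (r * x))].

Inductive ideal_mul (A : comNzRingType) (I J : A -> Prop) : A -> Prop :=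
  | ideal_mul0 : ideal_mul I J 0
  | ideal_mulD a b x : I a -> J b -> ideal_mul I J x -> ideal_mul I J (a * b + x).

Fixpoint ideal_pow (A : comNzRingType) (I : A -> Prop) (t : nat) : A -> Prop :=
  match t with
  | 0%N => fun _ => True
  | t'.+1 => ideal_mul (ideal_pow I t') I
  end.

Definition ideal_cap (A : comNzRingType) (I J : A -> Prop) : A -> Prop :=
  fun x => I x /\ J x.

(* I ∩ R for an ideal I of R[X] (R identified with constant polynomials). *)
Definition contr (R : idomainType) (I : {poly R} -> Prop) : R -> Prop :=
  fun r => I r%:P.

Definition comaximal (A : comNzRingType) (I J : A -> Prop) : Prop :=
  exists a b, [/\ I a, J b & a + b = 1].

Definition power_stable (R : idomainType) (I : {poly R} -> Prop) : Prop :=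
  forall t : nat, (1 <= t)%N ->
    forall r : R, contr (ideal_pow I t) r <-> ideal_pow (contr I) t r.

(* Main.v *)
Require Import Defs.
From HB Require Import structures.
From mathcomp Require Import all_boot all_order all_algebra.
Set Implicit Arguments. Unset Strict Implicit. Unset Printing Implicit Defensive.
Import GRing.Theory.
Local Open Scope ring_scope.

Section Gen.
Variable A : comNzRingType.
Implicit Types P Q : A -> Prop.

Lemma mul_ideal P Q : is_ideal P -> is_ideal (ideal_mul P Q).
Proof.
case=> P0 PD PM; split; first exact: ideal_mul0.
- move=> x y Hx Hy; elim: Hx => [|a b x' Ha Hb _ IH]; first by rewrite add0r.
  by rewrite -addrA; apply: ideal_mulD.
- move=> r x Hx; elim: Hx => [|a b x' Ha Hb _ IH]; first by rewrite mulr0; exact: ideal_mul0.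
  by rewrite mulrDr mulrA; apply: ideal_mulD => //; apply: PM.
Qed.

Lemma pow_ideal P n : is_ideal P -> is_ideal (ideal_pow P n).
Proof.
move=> HP; case: n => [|n] /=; first by split.
by apply: mul_ideal; elim: n => [|n IH] /=; [split | apply: mul_ideal].
Qed.

Lemma cap_ideal P Q : is_ideal P -> is_ideal Q -> is_ideal (ideal_cap P Q).
Proof.
case=> P0 PD PM [Q0 QD QM]; split; first by split.
- by move=> x y [? ?] [? ?]; split; [apply: PD|apply: QD].
- by move=> r x [? ?]; split; [apply: PM|apply: QM].
Qed.

Lemma mul_mono P Q P' Q' x : (forall y, P y -> P' y) -> (forall y, Q y -> Q' y) ->
  ideal_mul P Q x -> ideal_mul P' Q' x.
Proof.
move=> HP HQ; elim=> [|a b x' Ha Hb _ IH]; first exact: ideal_mul0.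
by apply: ideal_mulD; auto.
Qed.

Lemma pow_mono P P' n x : (forall y, P y -> P' y) -> ideal_pow P n x -> ideal_pow P' n x.
Proof.
move=> HP; elim: n x => [|n IH] x //= H.
by apply: mul_mono H => //; apply: IH.
Qed.

Lemma comax_sym P Q : comaximal P Q -> comaximal Q P.
Proof. by case=> a [b [Ha Hb E]]; exists b, a; split => //; rewrite addrC. Qed.

Lemma comax_mul P Q Q' : is_ideal P -> comaximal P Q -> comaximal P Q' ->
  comaximal P (ideal_mul Q Q').
Proof.
case=> P0 PD PM [p [q [Hp Hq E]]] [p' [q' [Hp' Hq' E']]].
exists (p * (p' + q') + q * p'), (q * q' + 0); split.
- apply: PD; first by rewrite mulrC; apply: PM.
  by apply: PM.
- by apply: ideal_mulD => //; exact: ideal_mul0.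
- by rewrite addr0 -addrA -mulrDr E' mulr1 -[RHS]E mulr1.
Qed.

Lemma comax_pow P Q n : is_ideal P -> is_ideal Q -> comaximal P Q ->
  comaximal (ideal_pow P n) (ideal_pow Q n).
Proof.
move=> HP HQ C.
have H1 : forall m, comaximal (ideal_pow P m) Q.
  elim=> [|m IH] /=; first by exists 1, 0; split => //; [case: HQ|rewrite addr0].
  apply: comax_sym; apply: comax_mul => //; by apply: comax_sym.
have H2 : forall m, comaximal (ideal_pow P n) (ideal_pow Q m).
  elim=> [|m IH] /=; first by exists 0, 1; split => //; [case: (pow_ideal n HP)|rewrite add0r].
  by apply: comax_mul => //; apply: pow_ideal.
exact: H2.
Qed.

Lemma cap_sub_mul P Q x : is_ideal P -> is_ideal Q -> comaximal P Q ->
  P x -> Q x -> ideal_mul P Q x.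
Proof.
move=> _ _ [p [q [Hp Hq E]]] Px Qx.
have -> : x = p * x + (x * q + 0) by rewrite addr0 [p * x]mulrC -mulrDr E mulr1.
by apply: ideal_mulD => //; apply: ideal_mulD => //; exact: ideal_mul0.
Qed.

Lemma prod_pow P Q n y z : is_ideal P -> is_ideal Q ->
  ideal_pow P n y -> ideal_pow Q n z -> ideal_pow (ideal_cap P Q) n (y * z).
Proof.
move=> HP HQ; elim: n y z => [|n IH] y z //= Hy Hz.
have HC := pow_ideal n.+1 (cap_ideal HP HQ); case: HC => C0 CD CM.
elim: Hy => [|y1 al y' Hy1 Hal _ IHy]; first by rewrite mul0r; exact: ideal_mul0.
rewrite mulrDl; apply: CD => //.
elim: Hz => [|z1 be z' Hz1 Hbe _ IHz]; first by rewrite mulr0; exact: ideal_mul0.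
have -> : y1 * al * (z1 * be + z') = (y1 * z1) * (al * be) + y1 * al * z'.
  by rewrite mulrDr; congr (_ + _); rewrite -!mulrA; congr (_ * _); rewrite mulrCA.
apply: ideal_mulD => //; first exact: IH.
case: HP => _ _ PM; case: HQ => _ _ QM; split; last exact: QM.
by rewrite mulrC; apply: PM.
Qed.

End Gen.

Lemma contr_pow (R : idomainType) (K : {poly R} -> Prop) n r :
  ideal_pow (contr K) n r -> ideal_pow K n r%:P.
Proof.
elim: n r => [|n IH] r //= H.
elim: H => [|a b x Ha Hb _ IHx]; first by rewrite polyC0; exact: ideal_mul0.
by rewrite polyCD polyCM; apply: ideal_mulD => //; apply: IH.
Qed.

Lemma contr_ideal (R : idomainType) (I : {poly R} -> Prop) :
  is_ideal I -> is_ideal (contr I).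
Proof.
case=> I0 ID IM; split; rewrite /contr.
- by rewrite polyC0.
- by move=> x y Hx Hy; rewrite polyCD; apply: ID.
- by move=> r x Hx; rewrite polyCM; apply: IM.
Qed.

Theorem lemma3p1 (R : idomainType) (I J : {poly R} -> Prop) :
  is_ideal I -> is_ideal J ->
  power_stable I -> power_stable J ->
  comaximal (contr I) (contr J) ->
  power_stable (ideal_cap I J).
Proof.
move=> HI HJ PI PJ C t t1 r; split; last exact: contr_pow.
rewrite /contr => H.
have Ha : ideal_pow (contr I) t r.
  by apply/(PI t t1); apply: pow_mono H => y [].
have Hb : ideal_pow (contr J) t r.
  by apply/(PJ t t1); apply: pow_mono H => y [].
have hI := contr_ideal HI; have hJ := contr_ideal HJ.
have M := cap_sub_mul (pow_ideal t hI) (pow_ideal t hJ) (comax_pow t hI hJ C) Ha Hb.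
have HC := pow_ideal t (cap_ideal hI hJ); case: HC => C0 CD CM.
elim: M => [|y z x Hy Hz _ IHx] //.
apply: CD => //; exact: prod_pow.
Qed.
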